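(* Let $L\subset\mathbb{R}$ be a Galois extension of $\mathbb{Q}$ with cyclic Galois group of order $4$ generated by $\sigma$, let $l$ be its unique quadratic subfield with fundamental unit $u_l>1$, and let $u_0\in\mathcal{O}_L^*$ with $u_0\ne\pm1$ and $N_{L/l}(u_0)=u_0\sigma^2(u_0)=\pm1$. Put $W_1=\log u_l$, $W_2=\log|u_0|$, $W_3=\log|\sigma(u_0)|$. For integers $n_1,n_2,n_3$ let $w=n_1\operatorname{LOG}(u_l)\wedge\operatorname{LOG}(u_0)+n_2\operatorname{LOG}(u_l)\wedge\operatorname{LOG}(\sigma(u_0))+n_3\operatorname{LOG}(u_0)\wedge\operatorname{LOG}(\sigma(u_0))$. Then (i) $\|w\|_1\ge 4|n_3|(W_2^2+W_3^2)$; and (ii) if $(n_1,n_2)\ne(0,0)$, then $\|w\|_1\ge 2W_1\big(2\max\{|W_2|,|W_3|\}+|W_2|+|W_3|\big)$.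
   Context: For a totally real number field $L$, $\operatorname{LOG}:\mathcal{O}_L^*\to\mathbb{R}^{\mathcal{A}_L}$, $\operatorname{LOG}(\gamma)=(\log|\tau(\gamma)|)_\tau$, indexed by the real embeddings $\tau$ of $L$. With the standard orthonormal basis $\{\delta^v\}$ of $\mathbb{R}^{\mathcal{A}_L}$ and $\delta^I=\delta^{v_1}\wedge\cdots\wedge\delta^{v_j}$ for $j$-subsets $I$, the 1-norm of $w=\sum_I c_I\delta^I\in\bigwedge^j\mathbb{R}^{\mathcal{A}_L}$ is $\|w\|_1=\sum_I|c_I|$. *)

(* Defs.v *)
From HB Require Import structures.
From mathcomp Require Import all_boot all_order all_algebra all_fingroup all_field.
From mathcomp Require Import all_classical all_reals all_analysis.
Set Implicit Arguments. Unset Strict Implicit. Unset Printing Implicit Defensive.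
Import Order.TTheory GRing.Theory Num.Theory.
Local Open Scope ring_scope.

Definition alg_integral (K : fieldType) (x : K) : Prop :=
  integralOver (fun z : int => z%:~R : K) x.

Definition int_unit (K : fieldType) (x : K) : Prop :=
  x != 0 /\ alg_integral x /\ alg_integral x^-1.

Definition fundamental_unit (L : fieldType) (l : pred L) (R : realType)
  (iota : L -> R) (u : L) : Prop :=
  [/\ u \in l, int_unit u, 1 < iota u &
      forall v, v \in l -> int_unit v -> exists k : int, v = u ^ k \/ v = - u ^ k].

(* LOG map, indexed by the real embeddings iota \o g, g in Gal(L/Q). *)
Definition LOG (R : realType) (L : splittingFieldType rat)
  (iota : {rmorphism L -> R}) (x : L) : gal_of (fullv : {vspace L}) -> R :=
  fun g => ln `|iota (g x)|.

(* Coefficients of x /\ y w.r.t. the basis delta^{a} /\ delta^{b} (a before b). *)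
Definition wedge2 (R : realType) (T : finType) (x y : T -> R) : T -> T -> R :=
  fun a b => x a * y b - x b * y a.

Definition norm1_2 (R : realType) (T : finType) (w : T -> T -> R) : R :=
  \sum_(a : T) \sum_(b : T | (enum_rank a < enum_rank b)%N) `|w a b|.

(* Main.v *)
Require Import Defs.
From HB Require Import structures.
From mathcomp Require Import all_boot all_order all_algebra all_fingroup all_field.
From mathcomp Require Import all_classical all_reals all_analysis.
From mathcomp Require Import all_solvable ring lra zify.
Import Order.TTheory GRing.Theory Num.Theory.
Local Open Scope ring_scope.


Lemma tri2 (R : realType) (u v p : R) : u - v = 2 * p -> 2 * `|p| <= `|u| + `|v|.
Proof.
move=> h; have : `|u - v| <= `|u| + `|v| by rewrite (le_trans (ler_normB _ _)).
by rewrite h normrM ger0_norm.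
Qed.

Lemma tri2p (R : realType) (u v p : R) : u + v = 2 * p -> 2 * `|p| <= `|u| + `|v|.
Proof. by move=> h; have := @tri2 R u (- v) p; rewrite normrN opprK; apply. Qed.

Lemma T34 (R : realType) (a b W2 W3 : R) :
  (a = 0 \/ 1 <= a ^+ 2) -> (b = 0 \/ 1 <= b ^+ 2) -> ~ (a = 0 /\ b = 0) ->
  `|W2| + `|W3| <= `|a * W2 + b * W3| + `|a * W3 - b * W2|.
Proof.
move=> ha hb hab.
have n2 := normr_ge0 W2; have n3 := normr_ge0 W3.
case: ha => [a0|ha].
  case: hb => [b0|hb]; first by exfalso; apply: hab.
  rewrite a0 !mul0r add0r sub0r normrN !normrM.
  have hb1 : 1 <= `|b| by rewrite -(ler_pXn2r (n:=2)) ?nnegrE // expr1n real_normK ?num_real.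
  have : 0 <= (`|b| - 1) * `|W2| by apply: mulr_ge0; lra.
  have : 0 <= (`|b| - 1) * `|W3| by apply: mulr_ge0; lra.
  nra.
case: hb => [b0|hb].
  rewrite b0 !mul0r addr0 subr0 !normrM.
  have ha1 : 1 <= `|a| by rewrite -(ler_pXn2r (n:=2)) ?nnegrE // expr1n real_normK ?num_real.
  have : 0 <= (`|a| - 1) * `|W2| by apply: mulr_ge0; lra.
  have : 0 <= (`|a| - 1) * `|W3| by apply: mulr_ge0; lra.
  nra.
set X := `|a * W2 + b * W3|; set Y := `|a * W3 - b * W2|.
have hX : X ^+ 2 = (a * W2 + b * W3) ^+ 2 by rewrite real_normK ?num_real.
have hY : Y ^+ 2 = (a * W3 - b * W2) ^+ 2 by rewrite real_normK ?num_real.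
have h2 : `|W2| ^+ 2 = W2 ^+ 2 by rewrite real_normK ?num_real.
have h3 : `|W3| ^+ 2 = W3 ^+ 2 by rewrite real_normK ?num_real.
have X0 : 0 <= X by apply: normr_ge0.
have Y0 : 0 <= Y by apply: normr_ge0.
have key : (`|W2| + `|W3|) ^+ 2 <= (X + Y) ^+ 2.
  have e : (X + Y) ^+ 2 = (a^+2 + b^+2) * (W2^+2 + W3^+2) + 2 * X * Y.
    by rewrite sqrrD hX hY; ring.
  rewrite e sqrrD h2 h3.
  have : 0 <= (`|W2| - `|W3|)^+2 := sqr_ge0 _.
  rewrite sqrrB h2 h3 => hh.
  have hab2 : 2 <= a ^+ 2 + b ^+ 2 by lra.
  have := sqr_ge0 W2; have := sqr_ge0 W3; have := mulr_ge0 X0 Y0. nra.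
rewrite -(ler_pXn2r (n:=2)) // nnegrE; [lra|lra].
Qed.

Definition Vf (R : realType) (a b c xi xj yi yj zi zj : R) :=
  a * (xi * yj - xj * yi) + b * (xi * zj - xj * zi) + c * (yi * zj - yj * zi).
Arguments Vf {R}.

Definition S6 (R : realType) (a b c W1 W2 W3 : R) :=
  `|Vf a b c W1 (- W1) W2 W3 W3 (- W2)|
  + `|Vf a b c W1 W1 W2 (- W2) W3 (- W3)|
  + `|Vf a b c W1 (- W1) W2 (- W3) W3 W2|
  + `|Vf a b c (- W1) W1 W3 (- W2) (- W2) (- W3)|
  + `|Vf a b c (- W1) (- W1) W3 (- W3) (- W2) W2|
  + `|Vf a b c W1 (- W1) (- W2) (- W3) (- W3) W2|.
Arguments S6 {R}.

Lemma core1 (R : realType) (a b c W1 W2 W3 : R) :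
  4 * `|c| * (W2 ^+ 2 + W3 ^+ 2) <= S6 a b c W1 W2 W3.
Proof.
rewrite /S6 /Vf.
set S := W2 ^+ 2 + W3 ^+ 2.
have S0 : 0 <= S by rewrite /S; have := sqr_ge0 W2; have := sqr_ge0 W3; lra.
have h1 := @tri2p R (a * (W1 * W3 - - W1 * W2) + b * (W1 * - W2 - - W1 * W3) + c * (W2 * - W2 - W3 * W3))
  (a * (W1 * - W3 - - W1 * - W2) + b * (W1 * W2 - - W1 * - W3) + c * (- W2 * W2 - - W3 * - W3))
  (- (c * S)).
have h2 := @tri2 R (a * (W1 * - W3 - - W1 * W2) + b * (W1 * W2 - - W1 * W3) + c * (W2 * W2 - - W3 * W3))
  (a * (- W1 * - W2 - W1 * W3) + b * (- W1 * - W3 - W1 * - W2) + c * (W3 * - W3 - - W2 * - W2))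
  (c * S).
rewrite normrN normrM (ger0_norm S0) in h1; rewrite normrM (ger0_norm S0) in h2.
have := h1 ltac:(rewrite /S; ring).
have := h2 ltac:(rewrite /S; ring).
have := normr_ge0 (a * (W1 * - W2 - W1 * W2) + b * (W1 * - W3 - W1 * W3) + c * (W2 * - W3 - - W2 * W3)).
have := normr_ge0 (a * (- W1 * - W3 - - W1 * W3) + b * (- W1 * W2 - - W1 * - W2) + c * (W3 * W2 - - W3 * - W2)).
lra.
Qed.

Lemma Tmax1 (R : realType) (a b W2 W3 : R) :
  (a = 0 \/ 1 <= a ^+ 2) -> (b = 0 \/ 1 <= b ^+ 2) -> ~ (a = 0 /\ b = 0) ->
  `|W2| <= `|a * W2 + b * W3| \/ `|W2| <= `|a * W3 - b * W2|.
Proof.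
move=> ha hb hab.
have n2 := normr_ge0 W2.
case: ha => [a0|ha].
  case: hb => [b0|hb]; first by exfalso; apply: hab.
  right; rewrite a0 mul0r sub0r normrN normrM.
  have hb1 : 1 <= `|b| by rewrite -(ler_pXn2r (n:=2)) ?nnegrE // expr1n real_normK ?num_real.
  have : 0 <= (`|b| - 1) * `|W2| by apply: mulr_ge0; lra.
  nra.
case: hb => [b0|hb].
  left; rewrite b0 mul0r addr0 normrM.
  have ha1 : 1 <= `|a| by rewrite -(ler_pXn2r (n:=2)) ?nnegrE // expr1n real_normK ?num_real.
  have : 0 <= (`|a| - 1) * `|W2| by apply: mulr_ge0; lra.
  nra.
have X0 := normr_ge0 (a * W2 + b * W3).
have Y0 := normr_ge0 (a * W3 - b * W2).
have hX : `|a * W2 + b * W3| ^+ 2 = (a * W2 + b * W3) ^+ 2 by rewrite real_normK ?num_real.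
have hY : `|a * W3 - b * W2| ^+ 2 = (a * W3 - b * W2) ^+ 2 by rewrite real_normK ?num_real.
have h2 : `|W2| ^+ 2 = W2 ^+ 2 by rewrite real_normK ?num_real.
have e : `|a * W2 + b * W3| ^+ 2 + `|a * W3 - b * W2| ^+ 2 = (a^+2 + b^+2) * (W2^+2 + W3^+2).
  by rewrite hX hY; ring.
have s3 := sqr_ge0 W3.
have key : 2 * W2 ^+ 2 <= (a^+2 + b^+2) * (W2^+2 + W3^+2).
  have : 0 <= (a^+2 + b^+2 - 2) * (W2^+2 + W3^+2) by apply: mulr_ge0; have := sqr_ge0 W2; lra.
  have := sqr_ge0 W2; nra.
case: (leP `|W2| `|a * W2 + b * W3|) => H1; first by left.
case: (leP `|W2| `|a * W3 - b * W2|) => H2; first by right.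
exfalso.
have q1 : `|a * W2 + b * W3| ^+ 2 < `|W2| ^+ 2 by rewrite ltr_pXn2r ?nnegrE.
have q2 : `|a * W3 - b * W2| ^+ 2 < `|W2| ^+ 2 by rewrite ltr_pXn2r ?nnegrE.
lra.
Qed.

Lemma Tmax (R : realType) (a b W2 W3 : R) :
  (a = 0 \/ 1 <= a ^+ 2) -> (b = 0 \/ 1 <= b ^+ 2) -> ~ (a = 0 /\ b = 0) ->
  Num.max `|W2| `|W3| <= `|a * W2 + b * W3| \/ Num.max `|W2| `|W3| <= `|a * W3 - b * W2|.
Proof.
move=> ha hb hab.
rewrite /Order.max; case: ltP => h.
  have hb' : (- b = 0 \/ 1 <= (- b) ^+ 2).
    by rewrite sqrrN; case: hb => [->|]; [left; rewrite oppr0|right].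
  have hab' : ~ (a = 0 /\ - b = 0).
    by move=> [? /eqP]; rewrite oppr_eq0 => /eqP ?; apply: hab.
  case: (@Tmax1 R a (- b) W3 W2 ha hb' hab') => H.
    by right; move: H; rewrite mulNr.
  by left; move: H; rewrite mulNr opprK.
by case: (@Tmax1 R a b W2 W3 ha hb hab) => H; [left|right].
Qed.

Lemma core2 (R : realType) (a b c W1 W2 W3 : R) :
  0 < W1 ->
  (a = 0 \/ 1 <= a ^+ 2) -> (b = 0 \/ 1 <= b ^+ 2) -> ~ (a = 0 /\ b = 0) ->
  2 * W1 * (2 * Num.max `|W2| `|W3| + `|W2| + `|W3|) <= S6 a b c W1 W2 W3.
Proof.
move=> W1p ha hb hab.
rewrite /S6 /Vf.
set P := W1 * ((a - b) * W2 + (a + b) * W3).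
set Q := W1 * ((a + b) * W2 - (a - b) * W3).
have h1 := @tri2 R (a * (W1 * W3 - - W1 * W2) + b * (W1 * - W2 - - W1 * W3) + c * (W2 * - W2 - W3 * W3))
  (a * (W1 * - W3 - - W1 * - W2) + b * (W1 * W2 - - W1 * - W3) + c * (- W2 * W2 - - W3 * - W3))
  (P).
have h2 := @tri2p R (a * (W1 * - W3 - - W1 * W2) + b * (W1 * W2 - - W1 * W3) + c * (W2 * W2 - - W3 * W3))
  (a * (- W1 * - W2 - W1 * W3) + b * (- W1 * - W3 - W1 * - W2) + c * (W3 * - W3 - - W2 * - W2))
  (Q).
have {}h1 := h1 ltac:(rewrite /P; ring).
have {}h2 := h2 ltac:(rewrite /Q; ring).
have e02 : `|a * (W1 * - W2 - W1 * W2) + b * (W1 * - W3 - W1 * W3) + c * (W2 * - W3 - - W2 * W3)|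
   = 2 * W1 * `|a * W2 + b * W3|.
  have -> : a * (W1 * - W2 - W1 * W2) + b * (W1 * - W3 - W1 * W3) + c * (W2 * - W3 - - W2 * W3)
    = - (2 * W1 * (a * W2 + b * W3)) by ring.
  by rewrite normrN normrM ger0_norm //; lra.
have e13 : `|a * (- W1 * - W3 - - W1 * W3) + b * (- W1 * W2 - - W1 * - W2) + c * (W3 * W2 - - W3 * - W2)|
   = 2 * W1 * `|a * W3 - b * W2|.
  have -> : a * (- W1 * - W3 - - W1 * W3) + b * (- W1 * W2 - - W1 * - W2) + c * (W3 * W2 - - W3 * - W2)
    = 2 * W1 * (a * W3 - b * W2) by ring.
  by rewrite normrM ger0_norm //; lra.
rewrite e02 e13.
have hT := @T34 R a b W2 W3 ha hb hab.
have hP3 : 2 * W1 * `|a * W2 + b * W3| <= `|P| + `|Q|.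
  have := @tri2 R (P) (- Q) (W1 * (a * W2 + b * W3)) ltac:(rewrite /P /Q; ring).
  by rewrite normrN normrM (ger0_norm (ltW W1p)) mulrA.
have hP4 : 2 * W1 * `|a * W3 - b * W2| <= `|P| + `|Q|.
  have := @tri2 R (P) (Q) (W1 * (a * W3 - b * W2)) ltac:(rewrite /P /Q; ring).
  by rewrite normrM (ger0_norm (ltW W1p)) mulrA.
have hh : W1 * (`|W2| + `|W3|) <= W1 * (`|a * W2 + b * W3| + `|a * W3 - b * W2|) by rewrite ler_pM2l.
have hm : W1 * Num.max `|W2| `|W3| <= W1 * `|a * W2 + b * W3| \/
          W1 * Num.max `|W2| `|W3| <= W1 * `|a * W3 - b * W2|.
  by case: (@Tmax R a b W2 W3 ha hb hab) => H; [left|right]; rewrite ler_pM2l.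
clearbody P Q.
case: hm => hm; lra.
Qed.


Lemma norm1_2_full (R : realType) (T : finType) (w : T -> T -> R) :
  (forall a b, w b a = - w a b) ->
  \sum_(a : T) \sum_(b : T) `|w a b| = 2 * norm1_2 w.
Proof.
move=> anti.
have F0 : forall a, w a a = 0.
  by move=> a; have := anti a a; move/eqP; rewrite -subr_eq0 opprK -mulr2n mulrn_eq0 /= => /eqP.
rewrite /norm1_2 mulr2n mulrDl mul1r.
transitivity (\sum_(a : T) (\sum_(b : T | (enum_rank a < enum_rank b)%N) `|w a b|
                + \sum_(b : T | (enum_rank b < enum_rank a)%N) `|w a b|)).
  apply: eq_bigr => a _.
  rewrite (bigID (fun b => (enum_rank a < enum_rank b)%N)) /=; congr (_ + _).
  rewrite (bigID (fun b => (enum_rank b < enum_rank a)%N)) /=.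
  rewrite [X in _ + X]big1 ?addr0.
    by apply: eq_bigl => b; case: ltngtP.
  move=> b /andP[h1 h2].
  have : enum_rank a = enum_rank b by apply/val_inj; move: h1 h2; rewrite -!leqNgt /=; lia.
  by move/enum_rank_inj => ->; rewrite F0 normr0.
rewrite big_split /=; congr (_ + _).
rewrite (exchange_big_dep predT) //=.
apply: eq_bigr => a _; apply: eq_bigr => b _.
by rewrite anti normrN.
Qed.

Lemma norm1_2_ge (R : realType) (T : finType) (w : T -> T -> R) (e0 e1 e2 e3 : T) :
  (forall a b, w b a = - w a b) -> uniq [:: e0; e1; e2; e3] ->
  `|w e0 e1| + `|w e0 e2| + `|w e0 e3| + `|w e1 e2| + `|w e1 e3| + `|w e2 e3|
  <= norm1_2 w.
Proof.
move=> anti U.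
have F0 : forall a, w a a = 0.
  by move=> a; have := anti a a; move/eqP; rewrite -subr_eq0 opprK -mulr2n mulrn_eq0 /= => /eqP.
set s := [:: e0; e1; e2; e3].
have le : \sum_(a <- s) \sum_(b <- s) `|w a b| <= \sum_(a : T) \sum_(b : T) `|w a b|.
  have sub : forall G : T -> R, (forall a, 0 <= G a) -> \sum_(a <- s) G a <= \sum_(a : T) G a.
    move=> G G0; rewrite big_uniq //= [X in _ <= X](bigID (fun a => a \in s)) /=.
    by rewrite lerDl sumr_ge0.
  apply: le_trans (sub _ _); last by move=> a; apply: sumr_ge0.
  by apply: ler_sum => a _; apply: sub.
rewrite norm1_2_full // in le.
move: le; rewrite !big_cons !big_nil !F0 !normr0 !addr0 !add0r.
rewrite (anti e1 e0) (anti e2 e0) (anti e3 e0) (anti e2 e1) (anti e3 e1) (anti e3 e2) !normrN.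
lra.
Qed.


Lemma sigma2_fix (L : splittingFieldType rat) (sigma : gal_of (fullv : {vspace L}))
  (l : {subfield L}) :
  galois 1%VS (fullv : {vspace L}) ->
  ('Gal(fullv / 1%VS) = <[sigma]>)%g ->
  #[sigma]%g = 4%N ->
  \dim l = 2%N ->
  forall a, a \in l -> (sigma ^+ 2)%g a = a.
Proof.
move=> galL Gs os dl.
have dimL : \dim (fullv : {vspace L}) = 4%N.
  by have := galois_dim galL; rewrite Gs -os dimv1 divn1.
have gall : galois l fullv by apply: galoisS galL; rewrite sub1v subvf.
have cH : #|('Gal(fullv / l))%g| = 2%N by rewrite -galois_dim // dimL dl.
have sH : ('Gal(fullv / l) \subset <[sigma]>)%g by rewrite -Gs galS // sub1v.
have : ('Gal(fullv / l) != 1)%g by apply/eqP => H1; move: cH; rewrite H1 cards1.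
case/trivgPn => h hH h1.
have hs : (h \in <[sigma]>)%g := fintype.subsetP sH _ hH.
case/cycleP: hs => i hi.
have h2 : (h ^+ 2 = 1)%g by rewrite -cH expg_cardG.
have : (sigma ^+ 2 = h)%g.
  rewrite hi -expg_mod_order os.
  move: h1 h2; rewrite hi -expgM => h1.
  move/eqP; rewrite -order_dvdn os => d.
  have nd : ~~ (4 %| i)%N.
    apply: contra h1 => d4; apply/eqP; rewrite -expg_mod_order os.
    by move: d4; rewrite /dvdn => /eqP ->.
  have : (i %% 4 = 2)%N by move: d nd; rewrite mulnC; lia.
  by move=> ->.
move=> e a al.
apply: (fixed_gal (subvf l)) => //.
by rewrite e.
Qed.


Lemma integral_rm (K : fieldType) (f : {rmorphism K -> K}) (x : K) :
  Defs.alg_integral x -> Defs.alg_integral (f x).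
Proof.
case=> p mp rp; exists p => //.
have := rmorph_root f rp.
rewrite -map_poly_comp.
suff -> : map_poly (f \o (fun z : int => z%:~R)) p = map_poly (fun z : int => z%:~R) p by [].
by apply: eq_map_poly => z /=; rewrite rmorph_int.
Qed.

Lemma integralM (K : fieldType) (x y : K) :
  Defs.alg_integral x -> Defs.alg_integral y -> Defs.alg_integral (x * y).
Proof. exact: (@integral_mul int K intr). Qed.

Lemma rat_integral (L : splittingFieldType rat) (r : rat) :
  Defs.alg_integral (r%:A : L) -> r \is a Num.int.
Proof.
case=> p mp rp.
set q : {poly rat} := map_poly intr p.
have e : map_poly (fun z : int => z%:~R : L) p = map_poly (in_alg L) q.
  by rewrite -map_poly_comp; apply: eq_map_poly => z; exact: (esym (rmorph_int (in_alg L) z)).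
have q0 : q.[r] = 0.
  apply/eqP; rewrite -(fmorph_eq0 (in_alg L)) -horner_map -e.
  exact: rp.
have rC : root (map_poly (ratr : rat -> algC) q) (ratr r) by rewrite rmorph_root // /root q0.
have : ratr r \in Aint.
  apply: (root_monic_Aint rC).
    by rewrite /q; do 2 apply: monic_map.
  apply/polyOverP => i; rewrite /q -map_poly_comp coef_map /= rmorph_int.
  exact: rpred_int.
by move/(Cint_rat_Aint (Crat_rat r)); rewrite Cint_rat.
Qed.

Lemma ln_pair (R : realType) (a b : R) : `|a| * `|b| = 1 -> ln `|b| = - ln `|a|.
Proof.
move=> h.
have a0 : 0 < `|a|.
  rewrite lt_neqAle normr_ge0 andbT eq_sym; apply/eqP => a0; move: h; rewrite a0 mul0r.
  by move/eqP; rewrite eq_sym oner_eq0.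
have b0 : 0 < `|b|.
  rewrite lt_neqAle normr_ge0 andbT eq_sym; apply/eqP => b0; move: h; rewrite b0 mulr0.
  by move/eqP; rewrite eq_sym oner_eq0.
have := lnM a0 b0; rewrite h ln1 => e.
lra.
Qed.

Theorem mainTheorem8 (R : realType) (L : splittingFieldType rat)
  (iota : {rmorphism L -> R})
  (sigma : gal_of (fullv : {vspace L}))
  (l : {subfield L}) (ul u0 : L) (n1 n2 n3 : int) :
  galois 1%VS (fullv : {vspace L}) ->
  ('Gal(fullv / 1%VS) = <[sigma]>)%g ->
  #[sigma]%g = 4%N ->
  \dim l = 2%N ->
  fundamental_unit (mem l) iota ul ->
  int_unit u0 -> u0 != 1 -> u0 != -1 ->
  (u0 * (sigma ^+ 2)%g u0 = 1 \/ u0 * (sigma ^+ 2)%g u0 = -1) ->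
  let W1 := ln (iota ul) in
  let W2 := ln `|iota u0| in
  let W3 := ln `|iota (sigma u0)| in
  let w := fun a b =>
      n1%:~R * wedge2 (LOG iota ul) (LOG iota u0) a b
    + n2%:~R * wedge2 (LOG iota ul) (LOG iota (sigma u0)) a b
    + n3%:~R * wedge2 (LOG iota u0) (LOG iota (sigma u0)) a b in
  4 * `|n3%:~R| * (W2 ^+ 2 + W3 ^+ 2) <= norm1_2 w /\
  ((n1, n2) != (0, 0) ->
     2 * W1 * (2 * Num.max `|W2| `|W3| + `|W2| + `|W3|) <= norm1_2 w).
Proof.
move=> galL Gs os dl [ulL [ul0 [ulI ulVI]] ulgt1 _] [u00 _] _ _ hN W1 W2 W3 w.
have s_gal : forall (i : nat) x, (sigma ^+ i)%g (sigma x) = (sigma ^+ i.+1)%g x.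
  by move=> i x; rewrite expgS galM ?memvf.
have s3 : forall x, (sigma ^+ 3)%g x = sigma ((sigma ^+ 2)%g x).
  by move=> x; rewrite expgSr galM ?memvf.
have s4 : forall x, (sigma ^+ 4)%g x = x.
  by move=> x; rewrite -os expg_order gal_id.
have s1 : forall x, (sigma ^+ 1)%g x = sigma x by move=> x; rewrite expg1.
have s0 : forall x, (sigma ^+ 0)%g x = x by move=> x; rewrite expg0 gal_id.
have ul2 : (sigma ^+ 2)%g ul = ul by apply: (@sigma2_fix _ _ _ galL Gs os dl)...
pose N := ul * sigma ul.
have sN : sigma N = N.
  have := s_gal 1%N ul; rewrite s1 ul2 => ss.
  by rewrite /N rmorphM /= ss mulrC.
have NG : forall i, (sigma ^+ i)%g N = N.
  elim=> [|i IH]; first by rewrite s0.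
  by rewrite -s_gal sN IH.
have N1 : N \in 1%VS.
  have /galois_fixedField fx := galL.
  rewrite -fx; apply/fixedFieldP; first exact: memvf.
  move=> x; rewrite Gs => /cycleP[i ->]; exact: NG.
case/vlineP: N1 => r Nr.
have sul0 : sigma ul != 0 by rewrite fmorph_eq0.
have N0 : N != 0 by rewrite mulf_neq0.
have NI : Defs.alg_integral N by apply: integralM => //; apply: integral_rm; exact: ulI.
have NVI : Defs.alg_integral N^-1.
  rewrite /N invfM -fmorphV; apply: integralM => //; apply: integral_rm; exact: ulVI.
have rI : r \is a Num.int by apply: (@rat_integral L); rewrite -Nr.
have rVI : r^-1 \is a Num.int.
  apply: (@rat_integral L); move: NVI; rewrite Nr.
  by rewrite -[(r^-1)%:A]/(in_alg L r^-1) fmorphV.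
have r0 : r != 0 by apply: contra N0; rewrite Nr => /eqP ->; rewrite scale0r.
case/intrP: rI => m rm; case/intrP: rVI => m' rm'.
have mm : m * m' = 1.
  by apply: (@intr_inj rat); rewrite rmorphM /= -rm -rm' mulfV // rmorph1.
have m1 : m = 1 \/ m = -1.
  have := congr1 absz mm; rewrite abszM => /eqP; rewrite muln_eq1 => /andP[/eqP h _].
  move: h; lia.
have iN : `|iota ul| * `|iota (sigma ul)| = 1.
  rewrite -normrM -rmorphM -/N Nr rm.
  rewrite -[(m%:~R)%:A]/(in_alg L m%:~R) rmorph_int rmorph_int.
  by case: m1 => ->; rewrite ?normrN normr1.
have iu : `|iota u0| * `|iota ((sigma ^+ 2)%g u0)| = 1.
  rewrite -normrM -rmorphM.
  by case: hN => ->; rewrite ?rmorphN rmorph1 ?normrN normr1.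
have iu3 : `|iota (sigma u0)| * `|iota ((sigma ^+ 3)%g u0)| = 1.
  rewrite -normrM -rmorphM s3 -rmorphM.
  by case: hN => ->; rewrite ?rmorphN rmorph1 ?rmorphN rmorph1 ?normrN normr1.
have iota_ul : 0 < iota ul by apply: lt_trans ulgt1.
have X0 : LOG iota ul (sigma ^+ 0)%g = W1 by rewrite /LOG s0 (ger0_norm (ltW iota_ul)).
have X1 : LOG iota ul (sigma ^+ 1)%g = - W1.
  by rewrite /LOG s1 (@ln_pair _ _ _ iN) (ger0_norm (ltW iota_ul)).
have X2 : LOG iota ul (sigma ^+ 2)%g = W1 by rewrite /LOG ul2 (ger0_norm (ltW iota_ul)).
have X3 : LOG iota ul (sigma ^+ 3)%g = - W1.
  by rewrite /LOG s3 ul2 (@ln_pair _ _ _ iN) (ger0_norm (ltW iota_ul)).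
have Y0 : LOG iota u0 (sigma ^+ 0)%g = W2 by rewrite /LOG s0.
have Y1 : LOG iota u0 (sigma ^+ 1)%g = W3 by rewrite /LOG s1.
have Y2 : LOG iota u0 (sigma ^+ 2)%g = - W2 by rewrite /LOG (@ln_pair _ _ _ iu).
have Y3 : LOG iota u0 (sigma ^+ 3)%g = - W3 by rewrite /LOG (@ln_pair _ _ _ iu3).
have Z0 : LOG iota (sigma u0) (sigma ^+ 0)%g = W3 by rewrite /LOG s0.
have Z1 : LOG iota (sigma u0) (sigma ^+ 1)%g = - W2 by rewrite /LOG s_gal (@ln_pair _ _ _ iu).
have Z2 : LOG iota (sigma u0) (sigma ^+ 2)%g = - W3 by rewrite /LOG s_gal (@ln_pair _ _ _ iu3).
have Z3 : LOG iota (sigma u0) (sigma ^+ 3)%g = W2 by rewrite /LOG s_gal s4.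
have anti : forall a b, w b a = - w a b by move=> a b; rewrite /w /wedge2; ring.
have U : uniq [:: (sigma ^+ 0)%g; (sigma ^+ 1)%g; (sigma ^+ 2)%g; (sigma ^+ 3)%g].
  by rewrite /= !inE !eq_expg_mod_order os.
have B := @norm1_2_ge _ _ _ _ _ _ _ anti U.
have E : forall a b, w a b = Vf n1%:~R n2%:~R n3%:~R (LOG iota ul a) (LOG iota ul b)
    (LOG iota u0 a) (LOG iota u0 b) (LOG iota (sigma u0) a) (LOG iota (sigma u0) b).
  by [].
rewrite !E X0 X1 X2 X3 Y0 Y1 Y2 Y3 Z0 Z1 Z2 Z3 -/(S6 _ _ _ W1 W2 W3) in B.
split; first exact: le_trans (core1 _ _ _ _ _ _ _) B.
move=> hn; apply: le_trans B; apply: core2.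
- by rewrite /W1 ln_gt0.
- have [->|n10] := eqVneq n1 0; first by left.
  right; rewrite -rmorphXn /= ler1z; move: n10; lia.
- have [->|n20] := eqVneq n2 0; first by left.
  right; rewrite -rmorphXn /= ler1z; move: n20; lia.
- move=> [/eqP h1 /eqP h2]; move: hn; rewrite intr_eq0 in h1; rewrite intr_eq0 in h2.
  by rewrite (eqP h1) (eqP h2).
Qed.
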